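(* Let $r\geq2$ and let $F$ be an $r$-graph. Let $c,a>0$ be fixed constants such that $c\cdot n^a\leq\mathit{ex}(n,F)$, and suppose that $d=d(n)$ satisfies $d=\Omega(1)$ and $d=o(n^{a-1})$. Then any $F$-freeness tester in $r$-graphs must perform $\Omega(n^{1-1/a}d^{-1/a})$ queries, when restricted to input $r$-graphs on $n$ vertices of average degree $d\pm o(d)$.
   Context: $\mathit{ex}(n,F)$ is the maximum number of edges of an $F$-free $r$-graph on $n$ vertices ($F$-free: containing no subgraph isomorphic to $F$). Testing model (general $r$-graphs model): the input is an $r$-graph $G$ on $n$ vertices with $m$ edges, where for each vertex the incident edges are ordered. An algorithm accesses $G$ only through queries: a vertex-set query asks whether a given $r$-set of vertices is an edge; a neighbour query asks, for a vertex $v$ and integer $i$, for the $i$-th edge incident to $v$ (returned as the other $r-1$ vertices, or an error if $\deg(v)<i$). $G$ is $\varepsilon$-far from a property $\mathcal P$ if at least $\varepsilon m$ edges must be added or deleted to obtain an $r$-graph in $\mathcal P$. A tester for $\mathcal P$ is a (possibly randomized) algorithm given a distance parameter $\varepsilon$ and query access to $G$ that accepts with probability at least $2/3$ if $G\in\mathcal P$ and rejects with probability at least $2/3$ if $G$ is $\varepsilon$-far from $\mathcal P$. Its query complexity is the number of queries performed. *)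

(* Defs.v *)
From Stdlib Require Import Reals.
From mathcomp Require Import all_boot.
Open Scope R_scope.

Set Implicit Arguments.
Unset Strict Implicit.
Unset Printing Implicit Defensive.

Definition is_rgraph (r n : nat) (E : {set {set 'I_n}}) : bool :=
  [forall e in E, #|e| == r].

Definition contains (n k : nat) (E : {set {set 'I_n}}) (EF : {set {set 'I_k}})
  : bool :=
  [exists phi : {ffun 'I_k -> 'I_n},
     injectiveb phi && [forall e in EF, (phi @: e) \in E]].

Definition Ffree (n k : nat) (E : {set {set 'I_n}}) (EF : {set {set 'I_k}})
  : bool := ~~ contains E EF.

(* ex(n,F): maximum number of edges of an F-free r-graph on n vertices
   (0 if there is none). *)
Definition ex (r k : nat) (EF : {set {set 'I_k}}) (n : nat) : nat :=
  \max_(E : {set {set 'I_n}} | is_rgraph r E && Ffree E EF) #|E|.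

(* An input: an r-graph together with, for every vertex, the ordered list
   of its incident edges. *)
Record input (n : nat) := Input {
  iedges : {set {set 'I_n}};
  iord : 'I_n -> seq {set 'I_n}
}.

Definition valid_input (r n : nat) (G : input n) : Prop :=
  is_rgraph r (iedges G) /\
  forall v : 'I_n, uniq (iord G v) /\
    forall e : {set 'I_n}, (e \in iord G v) = (e \in iedges G) && (v \in e).

Inductive query (n : nat) : Type :=
  | QVertexSet : {set 'I_n} -> query n
  | QNeighbour : 'I_n -> nat -> query n.   (* i-th edge incident to v (1-based) *)

Inductive answer (n : nat) : Type :=
  | ABool : bool -> answer n
  | AEdge : option {set 'I_n} -> answer n. (* None = error *)

Definition answer_query (n : nat) (G : input n) (q : query n) : answer n :=
  match q with
  | QVertexSet X => @ABool n (X \in iedges G)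
  | QNeighbour v i =>
      if ((0 < i) && (i <= size (iord G v)))%N then
        @AEdge n (Some (nth set0 (iord G v) i.-1 :\ v))
      else @AEdge n None
  end.

(* A deterministic adaptive query algorithm = a decision tree. *)
Inductive qtree (n : nat) : Type :=
  | QLeaf : bool -> qtree n                         (* true = accept *)
  | QNode : query n -> (answer n -> qtree n) -> qtree n.

Fixpoint run (n : nat) (t : qtree n) (G : input n) : bool :=
  match t with
  | QLeaf b => b
  | QNode q k => run (k (answer_query G q)) G
  end.

Fixpoint nqueries (n : nat) (t : qtree n) (G : input n) : nat :=
  match t with
  | QLeaf _ => 0
  | QNode q k => (nqueries (k (answer_query G q)) G).+1
  end.

(* A randomized algorithm = a finite probability distribution over decision
   trees, given as a list of (probability, tree). *)
Definition ralg (n : nat) := seq (R * qtree n).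

Definition is_distribution (n : nat) (T : ralg n) : Prop :=
  (forall p, List.In p T -> (0 <= fst p)) /\
  List.fold_right (fun (p : R * qtree n) (acc : R) => Rplus (fst p) acc) 0 T = 1.

Definition accept_prob (n : nat) (T : ralg n) (G : input n) : R :=
  List.fold_right (fun (p : R * qtree n) (acc : R) => Rplus (if run (snd p) G then fst p else 0) acc) 0 T.

Definition far_from_Ffree (r n k : nat) (EF : {set {set 'I_k}}) (eps : R)
  (E : {set {set 'I_n}}) : Prop :=
  forall H : {set {set 'I_n}}, is_rgraph r H -> Ffree H EF ->
    (eps * INR #|E| <= INR #|(E :\: H) :|: (H :\: E)|).

Definition avg_degree (r n : nat) (E : {set {set 'I_n}}) : R :=
  (INR r * INR #|E| / INR n).

Definition is_Ffree_tester (r n k : nat) (EF : {set {set 'I_k}})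
  (K : {set {set 'I_n}} -> Prop) (eps : R) (T : ralg n) : Prop :=
  is_distribution T /\
  forall G : input n, valid_input r G -> K (iedges G) ->
    (Ffree (iedges G) EF -> (2 / 3 <= accept_prob T G)) /\
    (far_from_Ffree r EF eps (iedges G) -> (accept_prob T G <= 1 / 3)).

Definition performs_at_least (r n : nat) (K : {set {set 'I_n}} -> Prop)
  (T : ralg n) (q : R) : Prop :=
  exists p, List.In p T /\ (0 < fst p) /\
    exists G : input n, valid_input r G /\ K (iedges G) /\
      (q <= INR (nqueries (snd p) G)).

(* Main.v *)
Require Import Defs.
From Stdlib Require Import Reals Lra Lia Classical ZArith.
From mathcomp Require Import all_boot zify.
Set Implicit Arguments.
Unset Strict Implicit.

Lemma exists_subset_card (T : finType) (A : {set T}) m :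
  (m <= #|A|)%N -> exists B : {set T}, B \subset A /\ #|B| = m.
Proof.
elim: m => [|m IH] hm.
  by exists set0; rewrite sub0set cards0.
have [B [hBA hB]] := IH (ltnW hm).
have : (0 < #|A :\: B|)%N by rewrite cardsDS //; lia.
case/card_gt0P => x; rewrite inE => /andP [xB xA].
exists (x |: B); split.
  by rewrite subUset sub1set xA hBA.
by rewrite cardsU1 xB hB.
Qed.

Lemma contains_sub n k (E E' : {set {set 'I_n}}) (EF : {set {set 'I_k}}) :
  E \subset E' -> contains E EF -> contains E' EF.
Proof.
move=> sub /existsP [phi /andP [inj /forallP h]].
apply/existsP; exists phi; rewrite inj /=; apply/forallP => e.
by apply/implyP => he; apply: (subsetP sub); move/implyP: (h e); apply.
Qed.

Lemma Ffree_sub n k (E E' : {set {set 'I_n}}) (EF : {set {set 'I_k}}) :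
  E \subset E' -> Ffree E' EF -> Ffree E EF.
Proof.
by move=> sub; rewrite /Ffree; apply: contra; apply: contains_sub.
Qed.

Lemma embed_contains m n k (f : 'I_m -> 'I_n) (finj : injective f) (d0 : 'I_m)
  (E : {set {set 'I_m}}) (EF : {set {set 'I_k}}) :
  (k <= m)%N -> contains ((fun e : {set 'I_m} => f @: e) @: E) EF -> contains E EF.
Proof.
move=> hkm /existsP [phi0 /andP [/injectiveP phi0inj /forallP hphi0]].
pose R := f @: [set: 'I_m].
pose g z := if [pick y | f y == z] is Some y then y else d0.
have gK : forall z, z \in R -> f (g z) = z.
  move=> z /imsetP [y _ ->]; rewrite /g; case: pickP => [y' /eqP // | /(_ y)].
  by rewrite eqxx.
have fgK : forall y, g (f y) = y.
  by move=> y; apply: finj; rewrite gK //; apply: imset_f.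
have base : forall phi : {ffun 'I_k -> 'I_n}, (forall x, phi x \in R) ->
    injective phi ->
    (forall e, e \in EF -> phi @: e \in ((fun e : {set 'I_m} => f @: e) @: E)) -> contains E EF.
  move=> phi hR phiinj hphi.
  apply/existsP; exists [ffun x => g (phi x)]; apply/andP; split.
    apply/injectiveP => x x'; rewrite !ffunE => h; apply: phiinj.
    by rewrite -(gK (phi x)) // h gK.
  apply/forallP => e; apply/implyP => he.
  have /imsetP [e' he' eq'] := hphi e he.
  have -> : [set [ffun x => g (phi x)] x | x in e] = e'.
    have -> : [set [ffun x => g (phi x)] x | x in e] = g @: (phi @: e).
      by rewrite -imset_comp; apply: eq_imset => x; rewrite ffunE.
    by rewrite eq' -imset_comp (eq_imset _ fgK) imset_id.
  exact: he'.
suff main : forall b (phi : {ffun 'I_k -> 'I_n}),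
    (#|[set x | phi x \notin R]| <= b)%N -> injective phi ->
    (forall e, e \in EF -> phi @: e \in ((fun e : {set 'I_m} => f @: e) @: E)) -> contains E EF.
  apply: (main #|[set x | phi0 x \notin R]|) => //.
  by move=> e he; move/implyP: (hphi0 e); apply.
elim => [|b IH] phi hb phiinj hphi.
  apply: (base phi) => // x; apply/negPn/negP => hx.
  have : (0 < #|[set x | phi x \notin R]|)%N by apply/card_gt0P; exists x; rewrite inE.
  lia.
have [/eqP hz | ] := boolP (#|[set x | phi x \notin R]| == 0%N).
  apply: (base phi) => // x; apply/negPn/negP => hx.
  have : (0 < #|[set x | phi x \notin R]|)%N by apply/card_gt0P; exists x; rewrite inE.
  lia.
rewrite -lt0n => /card_gt0P [w]; rewrite inE => hw.
have [y hy] : exists y, f y \notin phi @: [set: 'I_k].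
  apply/existsP; rewrite -negb_forall; apply/negP => /forallP hall.
  have sub : R \subset (phi @: [set: 'I_k]) :\ phi w.
    apply/subsetP => z /imsetP [y _ ->]; rewrite in_setD1 hall andbT.
    by apply: contra hw => /eqP <-; apply: imset_f.
  move: (subset_leq_card sub).
  have := cardsD1 (phi w) (phi @: [set: 'I_k]).
  rewrite imset_f // card_imset // card_imset // cardsT card_ord.
  rewrite ?card_ord => h1 h2; rewrite cardsT card_ord in h2; lia.
pose phi' := [ffun x => if x == w then f y else phi x].
have wnot : forall e, e \in EF -> w \notin e.
  move=> e he; apply/negP => we.
  have /imsetP [e' _ eq'] := hphi e he.
  have : phi w \in f @: e' by rewrite -eq'; apply: imset_f.
  case/imsetP => z _ hz; move: hw; rewrite hz; apply/negP; rewrite negbK.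
  exact: imset_f.
apply: (IH phi').
- have sub : [set x | phi' x \notin R] \subset [set x | phi x \notin R] :\ w.
    apply/subsetP => x; rewrite !inE /phi' ffunE.
    case: eqP => [_ | _] //=; rewrite imset_f //.
  move: (subset_leq_card sub); have := cardsD1 w [set x | phi x \notin R].
  rewrite inE hw => h1 h2; move: hb; rewrite h1 /= add1n ltnS => hb; exact: leq_trans h2 hb.
- move=> x x'; rewrite /phi' !ffunE.
  case: eqP => [-> | hx]; case: eqP => [-> | hx'] //.
  + move=> h; move: hy; rewrite h imset_f //.
  + move=> h; move: hy; rewrite -h imset_f //.
  + by move/phiinj.
- move=> e he.
  have -> : phi' @: e = phi @: e.
    apply: eq_in_imset => x hx; rewrite /phi' ffunE.
    case: eqP => // hxw; move: (wnot e he); rewrite -hxw hx //.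
  exact: hphi.
Qed.

Lemma kset_missing n k r (EF : {set {set 'I_k}}) (hF : is_rgraph r EF)
  (H : {set {set 'I_n}}) (hH : Ffree H EF) (S : {set 'I_n}) (hS : #|S| = k) :
  exists e : {set 'I_n}, [&& e \subset S, #|e| == r & e \notin H].
Proof.
case: (boolP [exists e : {set 'I_n}, [&& e \subset S, #|e| == r & e \notin H]]) => [/existsP // | ].
rewrite negb_exists => /forallP hall.
exfalso; rewrite /Ffree in hH; apply: (negP hH).
pose phi := [ffun x : 'I_k => @enum_val _ (mem S) (cast_ord (esym hS) x)].
have phiinj : injective phi.
  move=> x y; rewrite !ffunE => /enum_val_inj /cast_ord_inj //.
apply/existsP; exists phi; apply/andP; split; first by apply/injectiveP.
apply/forallP => e; apply/implyP => he.
have := hall (phi @: e); rewrite !negb_and negbK => /orP [|/orP []] //.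
- case/negP; apply/subsetP => z /imsetP [x _ ->]; rewrite ffunE.
  exact: (@enum_valP _ (mem S)).
- by rewrite card_imset //; move/forallP: hF => /(_ e); rewrite he /= => ->.
Qed.

Lemma supersets_bound n (V e : {set 'I_n}) k r :
  e \subset V -> #|e| = r ->
  (#|[set S : {set 'I_n} | (S \in [set S : {set 'I_n} | S \subset V & #|S| == k])
       && (e \subset S)]| <= 'C(#|V| - r, k - r))%N.
Proof.
move=> eV er.
set A := [set S : {set 'I_n} | _].
have inj : {in A &, injective (fun S : {set 'I_n} => S :\: e)}.
  move=> S1 S2; rewrite !inE => /andP [_ h1] /andP [_ h2] eq.
  by rewrite -(setID S1 e) -(setID S2 e) eq (setIidPr h1) (setIidPr h2).
rewrite -(card_in_imset inj).
have -> : (#|V| - r = #|V :\: e|)%N by rewrite cardsDS // er.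
rewrite -cards_draws; apply: subset_leq_card; apply/subsetP => T /imsetP [S].
rewrite !inE => /andP [/andP [SV /eqP Sk] eS] ->.
rewrite (setSD _ SV) /= cardsDS // Sk er eqxx.
by []. Qed.

Lemma bin_identity s k r : (r <= k)%N -> (k <= s)%N ->
  ('C(s, k) * 'C(k, r) = 'C(s, r) * 'C(s - r, k - r))%N.
Proof.
move=> hrk hks.
have h1 := bin_fact hks.
have h2 := bin_fact hrk.
have h3 := bin_fact (leq_trans hrk hks).
have h4 : (k - r <= s - r)%N by lia.
have h4' := bin_fact h4.
have e : (s - r - (k - r) = s - k)%N by lia.
rewrite e in h4'.
apply/eqP; rewrite -(eqn_pmul2r (fact_gt0 r)) -(eqn_pmul2r (fact_gt0 (k - r)))
  -(eqn_pmul2r (fact_gt0 (s - k))); apply/eqP.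
transitivity ('C(s, k) * ('C(k, r) * (r`! * (k - r)`!)) * (s - k)`!)%N; first by lia.
rewrite h2.
transitivity ('C(s, k) * (k`! * (s - k)`!))%N; first by lia.
rewrite h1 -h3 -h4'; lia.
Qed.

Lemma far_count n k r (EF : {set {set 'I_k}}) (hF : is_rgraph r EF)
  (H : {set {set 'I_n}}) (hH : Ffree H EF) (V : {set 'I_n}) :
  (r <= k)%N -> (k <= #|V|)%N ->
  ('C(#|V|, r) <= #|[set e : {set 'I_n} | [&& e \subset V, #|e| == r & e \notin H]]| * 'C(k, r))%N.
Proof.
move=> hrk hkV.
set Mis := [set e : {set 'I_n} | _].
set Ks := [set S : {set 'I_n} | S \subset V & #|S| == k].
have main : ('C(#|V|, k) <= #|Mis| * 'C(#|V| - r, k - r))%N.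
  rewrite -cards_draws -/Ks -sum1_card.
  apply: (@leq_trans (\sum_(S in Ks) \sum_(e | (e \in Mis) && (e \subset S)) 1)%N).
    apply: leq_sum => S; rewrite inE => /andP [SV /eqP Sk].
    have [e /and3P [eS er eH]] := @kset_missing n k r EF hF H hH S Sk.
    rewrite sum1dep_card; apply/card_gt0P; exists e; rewrite !inE eS er eH /= !andbT.
    exact: (subset_trans eS SV).
  rewrite (exchange_big_dep (mem Mis)) /=; last by move=> ? ? _ /andP [].
  rewrite -sum_nat_const; apply: leq_sum => e; rewrite inE => /and3P [eV /eqP er _].
  apply: leq_trans (@supersets_bound n V e k r eV er).
  rewrite sum1dep_card; apply: subset_leq_card; apply/subsetP => S.
  by rewrite !inE => /and3P [-> _ ->].
have hpos : (0 < 'C(#|V| - r, k - r))%N by rewrite bin_gt0; lia.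
rewrite -(leq_pmul2r hpos) -bin_identity //.
rewrite mulnAC; rewrite leq_pmul2r ?bin_gt0 //.
Qed.

Lemma bin_double s r : (2 * r <= s.+1)%N -> ('C(s.+1, r) <= 2 * 'C(s, r))%N.
Proof.
move=> h.
have e := mul_bin_down s.+1 r; rewrite /= in e.
have pos : (0 < s.+1 - r)%N by lia.
rewrite -(leq_pmul2l pos) -e mulnA; apply: leq_mul => //; lia.


Qed.

Lemma exists_s M e r : forall s0, (s0 <= M)%N -> ('C(s0, r) <= e)%N ->
  exists s, [/\ (s0 <= s <= M)%N, ('C(s, r) <= e)%N & (s = M \/ (e < 'C(s.+1, r))%N)].
Proof.
move=> s0; move hd : (M - s0)%N => d; elim: d s0 hd => [|d IH] s0 hd h1 h2.
  exists s0; split => //; first by rewrite leqnn h1. left; lia.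
have [h3 | h3] := leqP 'C(s0.+1, r) e.
  have [s [hs1 hs2 hs3]] := IH s0.+1 ltac:(lia) ltac:(lia) h3.
  exists s; split => //; lia.
exists s0; split => //; first by rewrite leqnn h1. by right.
Qed.

Definition mkInput n (E : {set {set 'I_n}}) : input n :=
  Input E (fun v => enum [set e in E | v \in e]).

Lemma mkInput_valid r n (E : {set {set 'I_n}}) : is_rgraph r E -> valid_input r (mkInput E).
Proof.
move=> h; split => // v; split; first exact: enum_uniq.
by move=> e; rewrite /= mem_enum inE.
Qed.

Fixpoint qpath n (t : qtree n) (G : input n) (L : nat) : seq (query n) :=
  match L, t with
  | 0, _ => [::]
  | L'.+1, QLeaf _ => [::]
  | L'.+1, QNode q k => q :: qpath (k (answer_query G q)) G L'
  end.

Lemma qpath_size n (t : qtree n) G L : (size (qpath t G L) <= L)%N.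
Proof.
elim: L t => [|L IH] [b|q k] //=; exact: IH.
Qed.

Lemma agree n (G G' : input n) : forall L (t : qtree n),
  (forall q, List.In q (qpath t G' L) -> answer_query G q = answer_query G' q) ->
  (minn L (nqueries t G') <= nqueries t G)%N /\
  ((nqueries t G' < L)%N -> run t G = run t G').
Proof.
elim => [|L IH] [b|q k] h /=; try by split => //; rewrite ?min0n.
rewrite (h q (or_introl erefl)).
have [h1 h2] := IH (k (answer_query G' q)) (fun q' hq' => h q' (or_intror hq')).
split; first by rewrite minnSS ltnS.
by rewrite ltnS.
Qed.

Definition blk n (M : nat) (q : query n) : nat :=
  match q with
  | QVertexSet X => if [pick x in X] is Some x then (x %/ M)%N else 0%N
  | QNeighbour v _ => (v %/ M)%N
  end.

Lemma answer_block n M j (E : {set {set 'I_n}}) :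
  (forall e, e \in E -> e != set0 /\ forall x, x \in e -> (x %/ M)%N = j) ->
  forall q, blk M q != j -> answer_query (mkInput E) q = answer_query (mkInput set0) q.
Proof.
move=> hE [X | v i] /= hq.
  rewrite in_set0; congr ABool; apply/negP => hX.
  have [hne hb] := hE X hX; move: hq; case: pickP => [x hx | h0].
    by rewrite hb ?eqxx.
  by move: hne; case/set0Pn => x; rewrite h0.
have -> : [set e in E | v \in e] = set0.
  apply/setP => e; rewrite !inE; apply/negP => /andP [he hv].
  by move: hq; rewrite ((hE e he).2 v hv) eqxx.
have -> : [set e in (set0 : {set {set 'I_n}}) | v \in e] = set0.
  by apply/setP => e; rewrite !inE.
by [].
Qed.

Lemma ex_le_bin r k (EF : {set {set 'I_k}}) M : (ex r EF M <= 'C(M, r))%N.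
Proof.
rewrite /ex; apply/bigmax_leqP => E /andP [hE _].
have := cards_draws [set: 'I_M] r; rewrite cardsT card_ord => <-; apply: subset_leq_card.
apply/subsetP => e he; rewrite inE subsetT /=.
by move/forallP: hE => /(_ e); rewrite he.
Qed.

Lemma ex_witness r k (EF : {set {set 'I_k}}) M : (0 < ex r EF M)%N ->
  exists E : {set {set 'I_M}}, [/\ is_rgraph r E, Ffree E EF & #|E| = ex r EF M].
Proof.
move=> h.
case: (boolP [exists E : {set {set 'I_M}}, is_rgraph r E && Ffree E EF]).
  case/existsP => E0 hE0.
  rewrite /ex (@bigmax_eq_arg _ E0 (fun E => is_rgraph r E && Ffree E EF) (fun E => #|E|) hE0) in h *.
  case: arg_maxnP => // E /andP [h1 h2] _.
  by exists E.
rewrite negb_exists => /forallP hall.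
move: h; rewrite /ex big_pred0 // => E; exact: negbTE (hall E).
Qed.

Lemma ex_emptyF r k (EF : {set {set 'I_k}}) M : (k <= M)%N -> EF = set0 -> ex r EF M = 0%N.
Proof.
move=> hkM ->; rewrite /ex big_pred0 // => E; apply/negbTE; rewrite negb_and; apply/orP; right.
rewrite /Ffree negbK; apply/existsP; exists [ffun x => widen_ord hkM x].
apply/andP; split.
  by apply/injectiveP => x y; rewrite !ffunE => /(congr1 val) /= /val_inj.
by apply/forallP => e; rewrite inE.
Qed.
Open Scope R_scope.

Fixpoint sumR (B : nat) (f : nat -> R) : R :=
  match B with 0%N => 0 | S B' => sumR B' f + f B' end.

Lemma sumR_add B f g : sumR B (fun j => f j + g j) = sumR B f + sumR B g.
Proof. elim: B => [|B IH] /=; lra. Qed.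

Lemma sumR_le B f g : (forall j, (j < B)%N -> f j <= g j) -> sumR B f <= sumR B g.
Proof.
elim: B => [|B IH] h /=; first lra.
have := h B (ltnSn B); have := IH (fun j hj => h j (ltnW hj)); lra.
Qed.

Lemma sumR_ind (s : seq nat) (p : R) B :
  sumR B (fun j => if j \in s then p else 0) = p * INR (count (mem s) (iota 0 B)).
Proof.
elim: B => [|B IH]; first by simpl; lra.
rewrite (_ : iota 0 B.+1 = iota 0 B ++ [:: B]); last by rewrite -addn1 iotaD.
rewrite count_cat plus_INR /= IH.
case: (B \in s) => /=; rewrite ?plus_INR /=; lra.
Qed.

Lemma count_iota_le (s : seq nat) B : (count (mem s) (iota 0 B) <= size s)%N.
Proof.
rewrite -size_filter; apply: uniq_leq_size; first by apply: filter_uniq; apply: iota_uniq.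
by move=> x; rewrite mem_filter => /andP [].
Qed.

Lemma sumR_lower B f Y : (forall j, (j < B)%N -> Y <= f j) -> INR B * Y <= sumR B f.
Proof.
elim: B => [|B IH] h; first by simpl; lra.
change (sumR B.+1 f) with (sumR B f + f B).
rewrite S_INR; have := h B (ltnSn B); have := IH (fun j hj => h j (ltnW hj)); lra.
Qed.

Definition psum n (T : ralg n) : R :=
  List.fold_right (fun (p : R * qtree n) (acc : R) => Rplus (fst p) acc) 0 T.

Definition Wj n (P : qtree n -> seq nat) (T : ralg n) (j : nat) : R :=
  List.fold_right (fun (p : R * qtree n) (acc : R) =>
     Rplus (if j \in P (snd p) then fst p else 0) acc) 0 T.

Lemma sum_Wj n (P : qtree n -> seq nat) (T : ralg n) B L :
  (forall p, List.In p T -> 0 <= fst p) ->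
  (forall t, (size (P t) <= L)%N) ->
  sumR B (Wj P T) <= INR L * psum T.
Proof.
move=> hpos hP; elim: T hpos => [|x T IH] hpos.
  rewrite /Wj /psum /=; elim: B => [|B IHB] /=; lra.
have -> : sumR B (Wj P (x :: T)) =
  sumR B (fun j => if j \in P x.2 then x.1 else 0) + sumR B (Wj P T).
  by rewrite -sumR_add.
rewrite sumR_ind.
have h1 := hpos x (or_introl erefl).
have h2 : INR (count (mem (P x.2)) (iota 0 B)) <= INR L.
  apply: le_INR; apply/leP; exact: leq_trans (count_iota_le _ _) (hP _).
have := IH (fun p hp => hpos p (or_intror hp)).
have e : psum (x :: T) = x.1 + psum T by [].
rewrite e; have h3 := Rmult_le_compat_l _ _ _ h1 h2; rewrite Rmult_plus_distr_l; move=> h4; lra.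
Qed.

Lemma acc_diff n (P : qtree n -> seq nat) (T : ralg n) (G1 G2 : input n) j :
  (forall p, List.In p T -> 0 <= fst p) ->
  (forall p, List.In p T -> 0 < fst p -> j \notin P (snd p) ->
      run (snd p) G1 = run (snd p) G2) ->
  accept_prob T G1 - accept_prob T G2 <= Wj P T j.
Proof.
elim: T => [|x T IH] hpos hrun /=; first by rewrite /Wj /=; lra.
have := IH (fun p hp => hpos p (or_intror hp)) (fun p hp => hrun p (or_intror hp)).
rewrite /Wj /= => hIH.
have h1 := hpos x (or_introl erefl).
case: (boolP (j \in P x.2)) => hj.
  case: (run x.2 G1); case: (run x.2 G2); lra.
have [hx | hx] := Rle_lt_or_eq_dec 0 x.1 h1.
  rewrite (hrun x (or_introl erefl) hx hj); case: (run x.2 G2); lra.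
rewrite -hx; case: (run x.2 G1); case: (run x.2 G2); lra.
Qed.

Definition blockprop n M j (E : {set {set 'I_n}}) :=
  forall e, e \in E -> e != set0 /\ forall x, x \in e -> (x %/ M)%N = j.

Lemma shift_lt M n j (x : 'I_M) : (j.+1 * M <= n)%N -> (x + j * M < n)%N.
Proof. move=> h; have := ltn_ord x; rewrite mulSn in h; lia. Qed.

Definition shift M n j (h : (j.+1 * M <= n)%N) (x : 'I_M) : 'I_n :=
  Ordinal (shift_lt x h).

Lemma shift_inj M n j h : injective (@shift M n j h).
Proof.
move=> x y /(congr1 val) /= e; apply: val_inj => /=; lia.
Qed.

Lemma shift_div M n j h (x : 'I_M) : ((@shift M n j h x) %/ M)%N = j.
Proof.
have hM : (0 < M)%N by apply: leq_ltn_trans (ltn_ord x).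
rewrite /= addnC divnMDl // divn_small // addn0.
by [].
Qed.

Lemma construct1 n k r (EF : {set {set 'I_k}}) M en j :
  (2 <= r)%N -> (0 < M)%N -> (j.+1 * M <= n)%N -> (k <= M)%N -> (0 < en)%N -> (en <= ex r EF M)%N ->
  exists E1 : {set {set 'I_n}}, [/\ is_rgraph r E1, #|E1| = en, Ffree E1 EF & blockprop M j E1].
Proof.
move=> hr hM hjM hkM hen hex.
have [Emax [h1 h2 h3]] := ex_witness (leq_trans hen hex).
have [E' [sub hE']] := exists_subset_card (m := en) (A := Emax) ltac:(lia).
pose f := @shift M n j hjM.
have finj : injective f := @shift_inj M n j hjM.
have rg' : is_rgraph r E'.
  apply/forallP => e; apply/implyP => he; move/forallP: h1 => /(_ e).
  by rewrite (subsetP sub e he).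
exists ((fun e : {set 'I_M} => f @: e) @: E'); split.
- apply/forallP => e; apply/implyP => /imsetP [e' he' ->].
  by rewrite card_imset //; move/forallP: rg' => /(_ e'); rewrite he'.
- by rewrite card_imset //; apply: imset_inj.
- rewrite /Ffree; apply/negP => /(embed_contains finj (Ordinal hM) hkM).
  by apply/negP; apply: (Ffree_sub sub h2).
- move=> e /imsetP [e' he' ->]; split.
    apply/set0Pn; move/forallP: rg' => /(_ e'); rewrite he' /= => /eqP er.
    have : (0 < #|e'|)%N by rewrite er; apply: leq_trans hr.
    by case/card_gt0P => x hx; exists (f x); apply: imset_f.
  by move=> x /imsetP [y _ ->]; apply: shift_div.
Qed.

Lemma construct2 n k r (EF : {set {set 'I_k}}) (hF : is_rgraph r EF) M en j :
  (2 <= r)%N -> (r <= k)%N -> (j.+1 * M <= n)%N -> (maxn k (2 * r) <= M)%N ->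
  (en <= 'C(M, r))%N -> ('C(maxn k (2 * r), r) <= en)%N ->
  exists E2 : {set {set 'I_n}}, [/\ is_rgraph r E2, #|E2| = en,
     far_from_Ffree r EF (1 / (2 * INR 'C(k, r)))%R E2 & blockprop M j E2].
Proof.
move=> hr hrk hjM hs0M henM hs0en.
pose f := @shift M n j hjM.
have finj : injective f := @shift_inj M n j hjM.
pose W := f @: [set: 'I_M].
have hW : #|W| = M by rewrite card_imset // cardsT card_ord.
have [s [/andP [hs1 hs1'] hs2 hs3]] := exists_s hs0M hs0en.
have [V [VW hV]] := exists_subset_card (A := W) (m := s) ltac:(by rewrite hW).
pose KV := [set e : {set 'I_n} | e \subset V & #|e| == r].
pose KW := [set e : {set 'I_n} | e \subset W & #|e| == r].
have hKV : #|KV| = 'C(s, r) by rewrite cards_draws hV.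
have hKW : #|KW| = 'C(M, r) by rewrite cards_draws hW.
have KVW : KV \subset KW.
  apply/subsetP => e; rewrite !inE => /andP [eV ->]; rewrite andbT.
  exact: subset_trans eV VW.
have [X [XD hX]] := exists_subset_card (A := KW :\: KV) (m := (en - 'C(s, r))%N)
  ltac:(by rewrite cardsDS // hKV hKW; lia).
exists (KV :|: X).
have memE : forall e, e \in KV :|: X -> (e \subset W) && (#|e| == r).
  move=> e; rewrite inE => /orP [].
    by rewrite inE => /andP [eV ->]; rewrite andbT; exact: subset_trans eV VW.
  by move/(subsetP XD); rewrite !inE => /andP [_ /andP [-> ->]].
have disj : KV :&: X = set0.
  apply/setP => e; rewrite !inE; apply/negP => /andP [eKV eX].
  by move: (subsetP XD e eX); rewrite in_setD inE eKV.
have hcard : #|KV :|: X| = en.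
  rewrite cardsU disj cards0 hKV hX; lia.
split.
- by apply/forallP => e; apply/implyP => /memE /andP [].
- exact: hcard.
- move=> H hH hHF; rewrite hcard.
  have hkV : (k <= #|V|)%N by rewrite hV; apply: leq_trans hs1; apply: leq_maxl.
  have hc := far_count hF hHF hrk hkV.
  set Mis := [set e : {set 'I_n} | _] in hc.
  set sym := (KV :|: X) :\: H :|: H :\: (KV :|: X).
  have Msub : Mis \subset sym.
    apply/subsetP => e; rewrite !inE => /and3P [eV er eH].
    by rewrite eH eV er.
  have h2s : (en <= 2 * 'C(s, r))%N.
    case: hs3 => [es | hlt].
      rewrite es in hs2; move: henM; rewrite -es => h; lia.
    have hs2r : (2 * r <= s.+1)%N.
      have := leq_maxr k (2 * r); lia.
    have := bin_double hs2r; lia.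
  have hn : (en <= 2 * (#|sym| * 'C(k, r)))%N.
    apply: (leq_trans h2s); rewrite leq_mul2l /=; rewrite -hV.
    apply: (leq_trans hc); rewrite leq_mul2r; apply/orP; right.
    exact: subset_leq_card Msub.
  have hCk : (0 < INR 'C(k, r))%R by apply: lt_0_INR; apply/ltP; rewrite bin_gt0.
  have := le_INR _ _ (elimT leP hn); rewrite !mult_INR /= => h.
  apply: (Rle_trans _ (1 / (2 * INR 'C(k, r)) * (2 * (INR #|sym| * INR 'C(k, r))))%R).
    apply: Rmult_le_compat_l.
      apply: Rlt_le; apply: Rdiv_lt_0_compat; lra.
    apply: (Rle_trans _ _ _ h). apply: Req_le; move: (INR #|sym|) (INR 'C(k, r)) => a b; ring.
  apply: Req_le; move: hCk; move: (INR #|sym|) (INR 'C(k, r)) => a b hb; field; lra.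
- move=> e /memE /andP [eW /eqP er]; split.
    apply/set0Pn.
    have : (0 < #|e|)%N by rewrite er; apply: leq_trans hr.
    by case/card_gt0P => x hx; exists x.
  move=> x /(subsetP eW) /imsetP [y _ ->]; exact: shift_div.
Qed.

Lemma in_map_In (A : Type) (f : A -> nat) (s : seq A) x :
  List.In x s -> f x \in map f s.
Proof.
elim: s => [|y s IH] //= [-> | h]; rewrite inE; first by rewrite eqxx.
by rewrite IH ?orbT.
Qed.

Lemma tester_lb n r k (EF : {set {set 'I_k}}) (K : {set {set 'I_n}} -> Prop) eps
  (T : ralg n) (M B L : nat) :
  is_Ffree_tester r EF K eps T ->
  (3 * L < B)%N ->
  (forall j, (j < B)%N -> exists E : {set {set 'I_n}}, [/\ is_rgraph r E, K E, Ffree E EF & blockprop M j E]) ->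
  (forall j, (j < B)%N -> exists E : {set {set 'I_n}}, [/\ is_rgraph r E, K E, far_from_Ffree r EF eps E & blockprop M j E]) ->
  exists p, List.In p T /\ 0 < fst p /\
    exists G, valid_input r G /\ K (iedges G) /\ (L <= nqueries (snd p) G)%N.
Proof.
move=> [[hpos hsum] htest] hBL hG1 hG2.
apply: NNPP => hneg.
have hshort : forall p, List.In p T -> 0 < fst p -> forall (E : {set {set 'I_n}}),
    is_rgraph r E -> K E -> (nqueries (snd p) (mkInput E) < L)%N.
  move=> p hp hp0 E h1 h2; rewrite ltnNge; apply/negP => hL; apply: hneg.
  exists p; split => //; split => //; exists (mkInput E); split => //.
  exact: mkInput_valid.
pose G0 := mkInput (set0 : {set {set 'I_n}}).
pose P := fun t : qtree n => map (blk M) (qpath t G0 L).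
have hPsize : forall t, (size (P t) <= L)%N.
  by move=> t; rewrite size_map; apply: qpath_size.
have hagree : forall (E : {set {set 'I_n}}) j t, blockprop M j E -> j \notin P t ->
    (minn L (nqueries t G0) <= nqueries t (mkInput E))%N /\
    ((nqueries t G0 < L)%N -> run t (mkInput E) = run t G0).
  move=> E j t hE hj; apply: agree => q hq; apply: (answer_block hE).
  apply/negP => /eqP hqj; move/negP: hj; apply; rewrite -hqj.
  exact: in_map_In.
have claim1 : forall p, List.In p T -> 0 < fst p -> (nqueries (snd p) G0 < L)%N.
  move=> p hp hp0; rewrite ltnNge; apply/negP => hL.
  have : has (predC (mem (P (snd p)))) (iota 0 B).
    rewrite has_count; have := count_predC (mem (P (snd p))) (iota 0 B).
    have := count_iota_le (P (snd p)) B; have := hPsize (snd p).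
    rewrite size_iota; lia.
  case/hasP => j; rewrite mem_iota add0n => /andP [_ hj] /= hjP.
  have [E [h1 h2 _ h4]] := hG1 j hj.
  have [hb _] := hagree E j (snd p) h4 hjP.
  have := hshort p hp hp0 E h1 h2.
  move: hb; rewrite (minn_idPl hL); lia.
have [j [hj hW]] : exists j, (j < B)%N /\ Wj P T j < 1 / 3.
  apply: NNPP => hno.
  have hall : forall j, (j < B)%N -> 1 / 3 <= Wj P T j.
    move=> j hj; apply: Rnot_lt_le => hlt; apply: hno; by exists j.
  have h1 := sumR_lower hall.
  have h2 := sum_Wj B hpos hPsize.
  have hps : psum T = 1 by [].
  rewrite hps in h2.
  have : INR (3 * L).+1 <= INR B by apply: le_INR; apply/leP.
  rewrite S_INR mult_INR /=; lra.
have [E1 [a1 b1 c1 d1]] := hG1 j hj.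
have [E2 [a2 b2 c2 d2]] := hG2 j hj.
have hd := @acc_diff n P T (mkInput E1) (mkInput E2) j hpos.
have hd' : accept_prob T (mkInput E1) - accept_prob T (mkInput E2) <= Wj P T j.
  apply: hd => p hp hp0 hjP.
  have hq := claim1 p hp hp0.
  rewrite ((hagree _ _ _ d1 hjP).2 hq) ((hagree _ _ _ d2 hjP).2 hq) //.
have [hA _] := htest (mkInput E1) (mkInput_valid a1) b1.
have [_ hB] := htest (mkInput E2) (mkInput_valid a2) b2.
have := hA c1; have := hB c2; lra.
Qed.

Lemma floor_nat x : 0 <= x -> exists m : nat, INR m <= x < INR m + 1.
Proof.
move=> hx; have [h1 h2] := archimed x.
have hz : (0 < up x)%Z by apply: lt_IZR; lra.
exists (Z.to_nat (up x - 1)).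
rewrite INR_IZR_INZ Z2Nat.id; last lia.
rewrite minus_IZR /=; lra.
Qed.

Lemma nat_ge x : exists N : nat, x <= INR N.
Proof.
case: (Rle_dec 0 x) => hx.
  have [m [h1 h2]] := floor_nat hx; exists m.+1; rewrite S_INR; lra.
by exists 0%N; simpl; lra.
Qed.

Lemma Rpower_pos x y : 0 < Rpower x y.
Proof. rewrite /Rpower; exact: exp_pos. Qed.

Lemma Rpower_inv_l x a : 0 < x -> 0 < a -> Rpower (Rpower x a) (1 / a) = x.
Proof.
move=> hx ha; rewrite Rpower_mult (_ : a * (1 / a) = 1); first exact: Rpower_1.
field; lra.
Qed.

Lemma Rpower_inv_r x a : 0 < x -> 0 < a -> Rpower (Rpower x (1 / a)) a = x.
Proof.
move=> hx ha; rewrite Rpower_mult (_ : 1 / a * a = 1); first exact: Rpower_1.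
field; lra.
Qed.
Unset Implicit Arguments.
Theorem proposition4p1
  (r : nat) (hr : (2 <= r)%N)
  (k : nat) (EF : {set {set 'I_k}}) (hF : is_rgraph r EF)
  (c a : R) (hc : (0 < c)) (ha : (0 < a))
  (hex : exists N0 : nat, forall n : nat, (N0 <= n)%N ->
           (c * Rpower (INR n) a <= INR (ex r EF n)))
  (d : nat -> R)
  (hd_lower : exists c' : R, (0 < c') /\
      exists N1 : nat, forall n : nat, (N1 <= n)%N -> (c' <= d n))
  (hd_upper : forall delta : R, (0 < delta) ->
      exists N2 : nat, forall n : nat, (N2 <= n)%N ->
        (Rabs (d n) <= delta * Rpower (INR n) (a - 1))) :
  exists eta : nat -> R,
    (forall delta : R, (0 < delta) ->
       exists N3 : nat, forall n : nat, (N3 <= n)%N -> (Rabs (eta n) <= delta)) /\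
    exists eps : R, (0 < eps) /\
    exists C : R, (0 < C) /\
    exists N : nat, forall n : nat, (N <= n)%N ->
      forall T : ralg n,
        is_Ffree_tester r EF
          (fun E => (Rabs (avg_degree r E - d n) <= eta n * d n)) eps T ->
        performs_at_least r
          (fun E => (Rabs (avg_degree r E - d n) <= eta n * d n)) T
          (C * Rpower (INR n) (1 - 1 / a) * Rpower (d n) (- (1 / a))).
Proof.
have [N0 hN0] := hex.
have [c' [hc' [N1 hN1]]] := hd_lower.
have hr0 : 0 < INR r by apply: lt_0_INR; apply/ltP; lia.
have hrk : (r <= k)%N.
  case: (set_0Vmem EF) => [hE | [e he]].
    exfalso; have := hN0 (maxn N0 k) (leq_maxl _ _).
    rewrite ex_emptyF ?leq_maxr //= => h.
    have := Rpower_pos (INR (maxn N0 k)) a; nra.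
  move/forallP: hF => /(_ e); rewrite he /= => /eqP <-.
  by rewrite -[X in (_ <= X)%N]card_ord; apply: max_card.
pose delta0 := INR r * c * Rpower 20 (- a).
have hdelta0 : 0 < delta0.
  have := Rpower_pos 20 (- a); rewrite /delta0 => h.
  apply: Rmult_lt_0_compat => //; exact: Rmult_lt_0_compat.
have [N2 hN2] := hd_upper delta0 hdelta0.
pose s0 := maxn k (2 * r).
pose Y0 := INR (maxn N0 s0) + 1.
have hY0 : 1 <= Y0 by rewrite /Y0; have := pos_INR (maxn N0 s0); lra.
have [Na hNa] := nat_ge (Rpower Y0 a * (INR r * c) / c').
have [Nb hNb] := nat_ge ((INR 'C(s0, r) + 1) * INR r / c').
exists (fun n => INR r / (INR n * c')).
split.
  move=> delta hdelta.
  have [N3 hN3] := nat_ge (INR r / (c' * delta) + 1); exists N3 => n hn.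
  have hN : INR r / (c' * delta) + 1 <= INR n.
    apply: (Rle_trans _ _ _ hN3); apply: le_INR; apply/leP; lia.
  have hq : 0 <= INR r / (c' * delta).
    apply: Rlt_le; apply: Rdiv_lt_0_compat => //; nra.
  have hnp : 0 < INR n by lra.
  have hnc : 0 < INR n * c' by nra.
  rewrite Rabs_pos_eq; last by apply: Rlt_le; apply: Rdiv_lt_0_compat.
  have h1 : INR r <= delta * (INR n * c').
    have e : INR r = (INR r / (c' * delta)) * (c' * delta) by field; lra.
    rewrite e; nra.
  rewrite /Rdiv; apply: (Rle_trans _ (delta * (INR n * c') * / (INR n * c'))).
    apply: Rmult_le_compat_r => //; left; exact: Rinv_0_lt_compat.
  right; field; lra.
exists (1 / (2 * INR 'C(k, r))); split.
  have : 0 < INR 'C(k, r) by apply: lt_0_INR; apply/ltP; rewrite bin_gt0.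
  move=> h; apply: Rdiv_lt_0_compat; lra.
exists (Rpower (INR r * c) (1 / a) / 12); split.
  have := Rpower_pos (INR r * c) (1 / a); lra.
exists (maxn (maxn N1 N2) (maxn (maxn Na Nb) 1)) => n hn T hT.
have hn1 : (N1 <= n)%N by lia.
have hn2 : (N2 <= n)%N by lia.
have hna : Rpower Y0 a * (INR r * c) / c' <= INR n.
  apply: (Rle_trans _ _ _ hNa); apply: le_INR; apply/leP; lia.
have hnb : (INR 'C(s0, r) + 1) * INR r / c' <= INR n.
  apply: (Rle_trans _ _ _ hNb); apply: le_INR; apply/leP; lia.
have hnpos : 0 < INR n by apply: lt_0_INR; apply/ltP; lia.
set D := d n.
have hD : c' <= D := hN1 n hn1.
have hDpos : 0 < D by lra.
have hDup : D <= delta0 * Rpower (INR n) (a - 1).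
  have := hN2 n hn2; rewrite -/D Rabs_pos_eq; lra.
have hrc : 0 < INR r * c by nra.
pose X := INR n * D / (INR r * c).
have hX0 : 0 < X by apply: Rdiv_lt_0_compat => //; nra.
pose y := Rpower X (1 / a).
have hY0pos : 0 < Y0 by lra.
have hXY : Rpower Y0 a <= X.
  have e : Rpower Y0 a = (Rpower Y0 a * (INR r * c) / c') * c' / (INR r * c).
    by field; lra.
  rewrite e /X /Rdiv; apply: Rmult_le_compat_r; first by left; apply: Rinv_0_lt_compat.
  by apply: Rmult_le_compat; try lra; apply: Rlt_le; apply: Rdiv_lt_0_compat => //;
     [apply: Rmult_lt_0_compat => //; apply: Rpower_pos].
have hy : Y0 <= y.
  rewrite -(Rpower_inv_l hY0pos ha) /y; apply: Rle_Rpower_l.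
    apply: Rlt_le; apply: Rdiv_lt_0_compat; lra.
  by split => //; apply: Rpower_pos.
have hy1 : 1 <= y by lra.
have [m [hm1 hm2]] := floor_nat (Rlt_le _ _ (Rlt_le_trans _ _ _ Rlt_0_1 hy1)).
pose M := m.+1.
have hMR : INR M = INR m + 1 by rewrite /M S_INR.
have hMbig : (maxn N0 s0 < M)%N.
  by apply/ltP; apply: INR_lt; rewrite /Y0 in hy; lra.
have hM0 : (0 < M)%N by [].
have hMN0 : (N0 <= M)%N by lia.
have hs0M : (s0 <= M)%N by lia.
have hkM : (k <= M)%N by rewrite /s0 in hs0M; lia.
have hnD : 0 <= INR n * D / INR r by apply: Rlt_le; apply: Rdiv_lt_0_compat => //; nra.
have [en [hen1 hen2]] := floor_nat hnD.
have hXM : X <= Rpower (INR M) a.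
  rewrite -[X in X <= _](Rpower_inv_r hX0 ha) -/y; apply: Rle_Rpower_l; first lra.
  split; [apply: Rpower_pos | lra].
have hcX : c * X = INR n * D / INR r by rewrite /X; field; lra.
have henex : (en <= ex r EF M)%N.
  apply/leP; apply: INR_le; have := hN0 M hMN0.
  have := Rmult_le_compat_l _ _ _ (Rlt_le _ _ hc) hXM; lra.
have hens0 : ('C(s0, r) <= en)%N.
  suff : ('C(s0, r) < en.+1)%N by [].
  apply/ltP; apply: INR_lt; rewrite S_INR.
  have h1 : INR 'C(s0, r) + 1 <= INR n * c' / INR r.
    have e : INR 'C(s0, r) + 1 = ((INR 'C(s0, r) + 1) * INR r / c') * c' / INR r.
      by field; lra.
    rewrite e /Rdiv; apply: Rmult_le_compat_r; first by left; apply: Rinv_0_lt_compat.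
    by apply: Rmult_le_compat_r; lra.
  have h2 : INR n * c' / INR r <= INR n * D / INR r.
    rewrite /Rdiv; apply: Rmult_le_compat_r; first by left; apply: Rinv_0_lt_compat.
    nra.
  lra.
have hen0 : (0 < en)%N by apply: leq_trans hens0; rewrite bin_gt0 /s0; lia.
have hypos : 0 < y by lra.
have hq : Rpower (INR r * c) (1 / a) / 12 * Rpower (INR n) (1 - 1 / a) * Rpower D (- (1 / a))
          = INR n / (12 * y).
  have hlnX : ln X = ln (INR n) + ln D - ln (INR r * c).
    rewrite /X /Rdiv ln_mult; last (by apply: Rinv_0_lt_compat); last nra.
    rewrite (ln_mult (INR n) D) // ln_Rinv //; ring.
  rewrite /y /Rpower hlnX.
  have e1 : exp (1 / a * ln (INR r * c)) / 12 * exp ((1 - 1 / a) * ln (INR n)) *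
            exp (- (1 / a) * ln D) =
            exp (1 / a * ln (INR r * c) + (1 - 1 / a) * ln (INR n) + - (1 / a) * ln D) / 12.
    by rewrite !exp_plus; field.
  have e2 : INR n / (12 * exp (1 / a * (ln (INR n) + ln D - ln (INR r * c)))) =
            exp (ln (INR n) + - (1 / a * (ln (INR n) + ln D - ln (INR r * c)))) / 12.
    rewrite exp_plus exp_Ropp exp_ln //; field.
    have := exp_pos (1 / a * (ln (INR n) + ln D - ln (INR r * c))); lra.
  rewrite e1 e2; congr (exp _ / 12); field; lra.
have hyn : y <= INR n / 20.
  have h20 : 0 < Rpower 20 a by apply: Rpower_pos.
  have hXn : X <= Rpower (INR n / 20) a.
    have e1 : Rpower (INR n / 20) a = Rpower (INR n) a / Rpower 20 a.
      have := Rpower_mult_distr (INR n / 20) 20 a ltac:(apply: Rdiv_lt_0_compat; lra) ltac:(lra).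
      rewrite (_ : INR n / 20 * 20 = INR n); last by field.
      move=> <-; field; lra.
    have e2 : Rpower (INR n) a = INR n * Rpower (INR n) (a - 1).
      rewrite -{2}(@Rpower_1 (INR n) hnpos) -Rpower_plus; congr Rpower; ring.
    have e3 : Rpower 20 (- a) = / Rpower 20 a by rewrite Rpower_Ropp.
    rewrite e1 e2 /X /delta0 e3 in hDup *.
    have hpa := Rpower_pos (INR n) (a - 1).
    rewrite /Rdiv; apply: (Rle_trans _ (INR n * (INR r * c * / Rpower 20 a * Rpower (INR n) (a - 1)) * / (INR r * c))).
      apply: Rmult_le_compat_r; first by left; apply: Rinv_0_lt_compat.
      by apply: Rmult_le_compat_l; lra.
    right; field; lra.
  rewrite /y -(Rpower_inv_l (x := INR n / 20) _ ha); last lra.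
  apply: Rle_Rpower_l; first by apply: Rlt_le; apply: Rdiv_lt_0_compat; lra.
  by split.
set q := Rpower (INR r * c) (1 / a) / 12 * Rpower (INR n) (1 - 1 / a) * Rpower D (- (1 / a)).
have hq0 : 0 <= q by rewrite /q hq; apply: Rlt_le; apply: Rdiv_lt_0_compat; lra.
have [L0 [hL1 hL2]] := floor_nat hq0.
pose L := L0.+1.
have hLR : INR L = INR L0 + 1 by rewrite /L S_INR.
pose B := (n %/ M)%N.
have hBM : (B * M <= n)%N by apply: leq_divM.
have hBM2 : INR n < (INR B + 1) * INR M.
  rewrite -S_INR -mult_INR; apply: lt_INR; apply/ltP; exact: (ltn_ceil n hM0).
have h3L : (3 * L < B)%N.
  apply/ltP; apply: INR_lt; rewrite mult_INR hLR (_ : INR 3 = 3); last by simpl; ring.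
  have hqy : q * (12 * y) = INR n by rewrite /q hq; field; lra.
  have hq53 : 5 / 3 <= q by nra.
  have hM2y : INR M <= 2 * y by lra.
  have hB1 : 6 * q < INR B + 1.
    have hBpos : 0 <= INR B + 1 by have := pos_INR B; lra.
    have : (INR B + 1) * INR M <= (INR B + 1) * (2 * y) by apply: Rmult_le_compat_l.
    nra.
  lra.
have hnr : 0 < INR r / INR n by apply: Rdiv_lt_0_compat.
have hK : forall E : {set {set 'I_n}}, #|E| = en ->
    Rabs (avg_degree r E - D) <= INR r / (INR n * c') * D.
  move=> E hE; rewrite /avg_degree hE.
  have e : INR r * INR en / INR n = (INR r / INR n) * INR en by field; lra.
  have hu1 : INR r * INR en / INR n <= D.
    rewrite e; apply: (Rle_trans _ ((INR r / INR n) * (INR n * D / INR r))).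
      apply: Rmult_le_compat_l; lra.
    right; field; lra.
  have hu2 : D - INR r / INR n <= INR r * INR en / INR n.
    rewrite e; apply: (Rle_trans _ ((INR r / INR n) * (INR n * D / INR r - 1))).
      right; field; lra.
    apply: Rmult_le_compat_l; lra.
  have hDc : 1 <= D / c'.
    have e2 : D / c' - 1 = (D - c') * / c' by field; lra.
    have : 0 <= (D - c') * / c'.
      apply: Rmult_le_pos; first lra.
      by left; apply: Rinv_0_lt_compat.
    lra.
  have hc3 : INR r / INR n <= INR r / (INR n * c') * D.
    apply: (Rle_trans _ ((INR r / INR n) * (D / c'))).
      have := Rmult_le_compat_l _ _ _ (Rlt_le _ _ hnr) hDc; lra.
    right; field; lra.
  apply: Rabs_le; split; lra.
have hfam1 : forall j, (j < B)%N -> exists E : {set {set 'I_n}},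
    [/\ is_rgraph r E, Rabs (avg_degree r E - D) <= INR r / (INR n * c') * D,
        Ffree E EF & blockprop M j E].
  move=> j hj.
  have hjM : (j.+1 * M <= n)%N by apply: leq_trans hBM; rewrite leq_mul2r hj orbT.
  have [E [h1 h2 h3 h4]] := @construct1 n k r EF M en j hr hM0 hjM hkM hen0 henex.
  by exists E; split => //; apply: hK.
have hfam2 : forall j, (j < B)%N -> exists E : {set {set 'I_n}},
    [/\ is_rgraph r E, Rabs (avg_degree r E - D) <= INR r / (INR n * c') * D,
        far_from_Ffree r EF (1 / (2 * INR 'C(k, r))) E & blockprop M j E].
  move=> j hj.
  have hjM : (j.+1 * M <= n)%N by apply: leq_trans hBM; rewrite leq_mul2r hj orbT.
  have henM : (en <= 'C(M, r))%N by apply: leq_trans henex (ex_le_bin r EF M).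
  have [E [h1 h2 h3 h4]] := construct2 hF hr hrk hjM hs0M henM hens0.
  by exists E; split => //; apply: hK.
have [p [hp [hp0 [G [hG1 [hG2 hG3]]]]]] := tester_lb hT h3L hfam1 hfam2.
exists p; split => //; split => //; exists G; split => //; split => //.
have hqL : q <= INR L by lra.
apply: (Rle_trans _ _ _ hqL); apply: le_INR; apply/leP; exact: hG3.
Qed.
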